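(* Let $A\in M_{r\times m}(\mathbb{Z})$ have rank $r<m$, let $V\in M_m(\mathbb{Z})$ be unimodular with $AV$ in column Hermite normal form, $V=[V_{\mathfrak a}\ \ V_{\mathfrak b}]$ with $V_{\mathfrak a}$ the first $r$ columns, and $W=V^{-1}=\begin{bmatrix}W_{\mathfrak a}\\ W_{\mathfrak b}\end{bmatrix}$ with $W_{\mathfrak a}$ the first $r$ rows. Let $P\in M_{m\times s}(\mathbb{Z})$. Then there exists a unimodular matrix $C\in M_{m-r}(\mathbb{Z})$ such that the first $s$ columns of $V_{\mathfrak b}C$ are exactly the columns of $P$ if and only if (1) $AP=0$, and (2) $W_{\mathfrak b}P\in M_{(m-r)\times s}(\mathbb{Z})$ can be extended to a unimodular matrix, i.e. there is an integer matrix $E'$ with $m-r-s$ columns such that $[W_{\mathfrak b}P\ \ E']$ is unimodular.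
   Context: A unimodular matrix is a square integer matrix with determinant $\pm1$. Column Hermite normal form: lower triangular integer matrix with zero columns on the right, positive pivots each strictly below the previous one, zeros to the right of each pivot and entries to its left in its row nonnegative and smaller than it. Interpretation: for a variable vector $x=(x_1,\dots,x_m)$ of the model (time, dependent variables, parameters) and scaling matrix $A$, the monomials $x^{c}=\prod_i x_i^{c_i}$ for the columns $c$ of $V_{\mathfrak b}$ form a generating set of the rational invariants of the scaling action $x\mapsto\lambda^A*x$; replacing $V_{\mathfrak b}$ by $V_{\mathfrak b}C$ with $C$ unimodular gives another such generating set, and the condition says the monomials $x^{p}$ for columns $p$ of $P$ can be taken as part of it. *)

(* Defs.v *)
From mathcomp Require Import all_boot all_order all_algebra.
Set Implicit Arguments. Unset Strict Implicit. Unset Printing Implicit Defensive.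
Import Order.TTheory GRing.Theory Num.Theory.
Local Open Scope ring_scope.

Definition unimodular (n : nat) (M : 'M[int]_n) : Prop :=
  \det M = 1 \/ \det M = -1.

Definition col_HNF (n p : nat) (H : 'M[int]_(n, p)) : Prop :=
  exists (c : nat) (piv : 'I_p -> 'I_n),
    (c <= p)%N /\
    (forall j : 'I_p, (c <= j)%N -> forall i : 'I_n, H i j = 0) /\
    (forall j1 j2 : 'I_p, (j1 < j2)%N -> (j2 < c)%N -> (piv j1 < piv j2)%N) /\
    (forall j : 'I_p, (j < c)%N ->
       0 < H (piv j) j /\
       (forall i : 'I_n, (i < piv j)%N -> H i j = 0) /\
       (forall j' : 'I_p, (j < j')%N -> H (piv j) j' = 0) /\
       (forall j' : 'I_p, (j' < j)%N -> 0 <= H (piv j) j' /\ H (piv j) j' < H (piv j) j)).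

Definition zrank (n p : nat) (A : 'M[int]_(n, p)) : nat :=
  \rank (map_mx (fun z : int => z%:~R : rat) A).

(* Main.v *)
Require Import Defs.
From mathcomp Require Import all_boot all_order all_algebra.
Import GRing.Theory Num.Theory.
Local Open Scope ring_scope.

Lemma hnf_c_le {r p : nat} {H : 'M[int]_(r, p)} :
  col_HNF H -> forall j : 'I_p, (r <= j)%N -> forall i, H i j = 0.
Proof.
move=> [c [piv [Hcp [Hz [Hinc _]]]]] j Hj i.
suff crle : (c <= r)%N by apply: Hz; apply: leq_trans crle Hj.
case: c Hcp Hz Hinc => [//|c] Hcp Hz Hinc.
have key : forall k (hk : (k < c.+1)%N), (k <= piv (Ordinal (leq_trans hk Hcp)))%N.
  elim=> [//|k IH] hk.
  have hk' : (k < c.+1)%N by apply: ltnW.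
  have := Hinc (Ordinal (leq_trans hk' Hcp)) (Ordinal (leq_trans hk Hcp)) (ltnSn k) hk.
  move: (IH hk'); set a := piv _; set b := piv _ => h1 h2.
  exact: leq_ltn_trans h1 h2.
have := key c (ltnSn c).
by move/leq_ltn_trans => /(_ _ (ltn_ord _)).
Qed.

Definition qm {m n : nat} (M : 'M[int]_(m, n)) : 'M[rat]_(m, n) :=
  map_mx (fun z : int => z%:~R : rat) M.

Lemma qmM (m n p : nat) (M : 'M[int]_(m, n)) (N : 'M[int]_(n, p)) :
  qm (M *m N) = qm M *m qm N.
Proof. by rewrite /qm map_mxM. Qed.

Lemma qm_inj (m n : nat) (M : 'M[int]_(m, n)) : qm M = 0 -> M = 0.
Proof.
move=> h; apply/matrixP => i j; move/matrixP: h => /(_ i j).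
by rewrite !mxE => /eqP; rewrite intr_eq0 => /eqP.
Qed.

Lemma unimod_unit {n : nat} {M : 'M[int]_n} : unimodular M -> M \in unitmx.
Proof. by move=> [] h; rewrite unitmxE h ?unitrN1 ?unitr1. Qed.

Theorem mainTheorem4 (r s t : nat)
  (A : 'M[int]_(r, r + (s + t))) (V : 'M[int]_(r + (s + t)))
  (P : 'M[int]_(r + (s + t), s)) :
  (0 < s + t)%N ->
  zrank A = r ->
  unimodular V ->
  col_HNF (A *m V) ->
  (exists C : 'M[int]_(s + t),
      unimodular C /\ lsubmx (rsubmx V *m C) = P)
  <->
  (A *m P = 0 /\
   exists E : 'M[int]_(s + t, t),
     unimodular (row_mx (dsubmx (invmx V) *m P) E)).
Proof.
move=> _ rk uV hnf.
have Vu := unimod_unit uV.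
have AVb : A *m rsubmx V = 0.
  rewrite mulmx_rsub; apply/matrixP => i j; rewrite !mxE.
  have := hnf_c_le hnf (rshift r j) (leq_addr _ _) i.
  by rewrite mxE.
set W := invmx V.
have WV : W *m V = 1%:M by rewrite mulVmx.
have VW : V *m W = 1%:M by rewrite mulmxV.
have Bdec : A *m V = lsubmx (A *m V) *m row_mx 1%:M 0.
  rewrite mul_mx_row mulmx1 mulmx0 -[LHS]hsubmxK; congr row_mx.
  by rewrite -mulmx_rsub AVb.
have Vqu : qm V \in unitmx.
  rewrite unitmxE /qm det_map_mx unitfE.
  by case: uV => ->; rewrite ?oppr_eq0 oner_eq0.
have Baq : qm (lsubmx (A *m V)) \in unitmx.
  rewrite -row_free_unit -row_leq_rank.
  have h1 : \rank (qm (A *m V)) = r.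
    by rewrite qmM mxrankMfree ?row_free_unit // -rk.
  have := mxrankM_maxl (qm (lsubmx (A *m V))) (qm (row_mx 1%:M 0 : 'M[int]_(r, r + (s + t)))).
  by rewrite -qmM -Bdec h1.
have ker : forall X : 'M[int]_(r, s), lsubmx (A *m V) *m X = 0 -> X = 0.
  move=> X hX; apply: qm_inj.
  have : qm (lsubmx (A *m V) *m X) = 0 by rewrite hX /qm map_mx0.
  rewrite qmM => h.
  by rewrite -(mulKmx Baq (qm X)) h mulmx0.
split.
- move=> [C [uC hP]]; split.
    by rewrite -hP -mulmx_lsub mulmxA AVb mul0mx /lsubmx; apply/matrixP=> i j; rewrite !mxE.
  exists (rsubmx C).
  have WbVb : dsubmx W *m rsubmx V = 1%:M.
    rewrite mul_dsub_mx mulmx_rsub WV.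
    by apply/matrixP => i j; rewrite !mxE eq_rshift.
  by rewrite -hP -mulmx_lsub mulmxA WbVb mul1mx hsubmxK.
- move=> [AP [E uE]].
  exists (row_mx (dsubmx W *m P) E); split => //.
  rewrite -mulmx_lsub row_mxKl.
  have WaP : usubmx W *m P = 0.
    apply: ker; rewrite -AP.
    have e : A *m P = (A *m V) *m (W *m P) by rewrite -mulmxA (mulmxA V) VW mul1mx.
    rewrite e -[A *m V]hsubmxK -[W *m P]vsubmxK mul_row_col.
    by rewrite -mulmx_rsub AVb mul0mx addr0 row_mxKl mul_usub_mx.
  have e : P = V *m (W *m P) by rewrite mulmxA VW mul1mx.
  rewrite {2}e -[V]hsubmxK -[W *m P]vsubmxK mul_row_col.
  rewrite -!mul_usub_mx -!mul_dsub_mx WaP mulmx0 add0r.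
  by rewrite row_mxKr.
Qed.
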